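(* If $\mathcal{M}_\times\perp\Sigma$ and $\mathcal{M}_\Sigma\perp E$, then $\mathcal{M}_\times\perp\mathsf{L}E$.
   Context: $\mathcal{E}$ is a locally cartesian closed category with a dominance: a class of monos (the $\Sigma$-monos) closed under pullback, identities and composition, classified by $\top:1\to\Sigma$ (each $\Sigma$-mono $U\to A$ is the pullback of $\top$ along a unique $A\to\Sigma$). $\mathsf{L}E=\sum_{\phi:\Sigma}E^{\phi}$ is the associated partial map classifier: maps $X\to\mathsf{L}E$ correspond to pairs of a $\Sigma$-mono $U\to X$ and a map $U\to E$. For a mono $m:I\to J$ and an object $E$, $m\perp E$ means every map $I\to E$ extends uniquely along $m$ to a map $J\to E$; for a class $\mathcal{N}$, $\mathcal{N}\perp E$ means $m\perp E$ for all $m\in\mathcal{N}$. Given a class $\mathcal{M}$ of monos, $\mathcal{M}_\times$ is the smallest class of monos containing $\mathcal{M}$ and stable under products (with arbitrary objects), and $\mathcal{M}_\Sigma$ is the smallest class of monos containing $\mathcal{M}_\times$ and stable under pullback along $\Sigma$-monos. *)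

(* Defs.v *)
Set Implicit Arguments.
Unset Strict Implicit.

Record Cat := {
  ob :> Type;
  hom : ob -> ob -> Type;
  idm : forall a, hom a a;
  cmp : forall a b c, hom b c -> hom a b -> hom a c;
  cmp_idl : forall a b (f : hom a b), cmp (idm b) f = f;
  cmp_idr : forall a b (f : hom a b), cmp f (idm a) = f;
  cmp_assoc : forall a b c d (f : hom c d) (g : hom b c) (h : hom a b),
      cmp f (cmp g h) = cmp (cmp f g) h
}.

Arguments hom {_} _ _.
Arguments idm {_} _.
Arguments cmp {_ _ _ _} _ _.
Notation "f \o g" := (cmp f g) (at level 40, left associativity).

Section Notions.
Variable C : Cat.

Definition mono {A B : C} (f : hom A B) : Prop :=
  forall (Z : C) (g h : hom Z A), f \o g = f \o h -> g = h.

Definition is_terminal (T : C) : Prop :=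
  forall X : C, exists t : hom X T, forall t' : hom X T, t' = t.

Definition is_pullback {A B D : C} (f : hom A D) (g : hom B D)
    (P : C) (p1 : hom P A) (p2 : hom P B) : Prop :=
  f \o p1 = g \o p2 /\
  forall (Z : C) (x : hom Z A) (y : hom Z B), f \o x = g \o y ->
    exists! k : hom Z P, p1 \o k = x /\ p2 \o k = y.

Definition is_product (A B P : C) (p1 : hom P A) (p2 : hom P B) : Prop :=
  forall (Z : C) (x : hom Z A) (y : hom Z B),
    exists! k : hom Z P, p1 \o k = x /\ p2 \o k = y.

(** Dependent product (right adjoint to pullback along [f : A -> B]) of
    [p : X -> A]: an object [q : P -> B] over [B], a pullback square
    [Q] of [q] along [f], and an evaluation [ev : Q -> X] over [A], which
    is universal: every map [f^* r -> p] over [A] corresponds to a unique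
    map [r -> q] over [B]. *)
Definition is_dprod {A B X : C} (f : hom A B) (p : hom X A)
    (P : C) (q : hom P B) (Q : C) (qP : hom Q P) (qA : hom Q A)
    (ev : hom Q X) : Prop :=
  is_pullback q f qP qA /\ p \o ev = qA /\
  forall (Z : C) (r : hom Z B) (W : C) (w1 : hom W Z) (w2 : hom W A),
    is_pullback r f w1 w2 ->
    forall g : hom W X, p \o g = w2 ->
    exists! h : hom Z P, q \o h = r /\
      (forall k : hom W Q, qP \o k = h \o w1 -> qA \o k = w2 -> ev \o k = g).

Definition lccc : Prop :=
  (forall (A B D : C) (f : hom A D) (g : hom B D),
      exists (P : C) (p1 : hom P A) (p2 : hom P B), is_pullback f g p1 p2) /\
  (forall (A B X : C) (f : hom A B) (p : hom X A),
      exists (P : C) (q : hom P B) (Q : C) (qP : hom Q P) (qA : hom Q A)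
             (ev : hom Q X), is_dprod f p q qP qA ev).

Definition mclass := forall A B : C, hom A B -> Prop.

(** A dominance: the class [Dm] of Sigma-monos, classified by [top]. *)
Record dominance (Dm : mclass) (one Sig : C) (top : hom one Sig) : Prop := {
  dom_mono : forall (U A : C) (m : hom U A), Dm U A m -> mono m;
  dom_pb : forall (U A B P : C) (m : hom U A) (g : hom B A)
      (p1 : hom P U) (p2 : hom P B),
      Dm U A m -> is_pullback m g p1 p2 -> Dm P B p2;
  dom_id : forall A : C, Dm A A (idm A);
  dom_comp : forall (A B D : C) (m : hom B D) (n : hom A B),
      Dm B D m -> Dm A B n -> Dm A D (m \o n);
  dom_top : Dm one Sig top;
  dom_class : forall (U A : C) (m : hom U A), Dm U A m ->
      exists! chi : hom A Sig, exists u : hom U one, is_pullback top chi u m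
}.

Definition orth {I J : C} (m : hom I J) (E : C) : Prop :=
  forall f : hom I E, exists! g : hom J E, g \o m = f.

Definition class_orth (N : mclass) (E : C) : Prop :=
  forall (I J : C) (m : hom I J), N I J m -> orth m E.

(** [M_x]: the smallest class containing [M], stable under products with
    arbitrary objects (for any choice of product diagrams). *)
Inductive Mx (M : mclass) : mclass :=
  | Mx_base : forall (I J : C) (m : hom I J), M I J m -> Mx M m
  | Mx_prod : forall (I J X PI PJ : C) (m : hom I J)
      (a1 : hom PI I) (a2 : hom PI X) (b1 : hom PJ J) (b2 : hom PJ X)
      (k : hom PI PJ),
      Mx M m -> is_product a1 a2 -> is_product b1 b2 ->
      b1 \o k = m \o a1 -> b2 \o k = a2 -> Mx M k.

(** [M_Sigma]: the smallest class containing [M_x] and stable under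
    pullback along Sigma-monos (members of [Dm]). *)
Inductive MS (Dm : mclass) (M : mclass) : mclass :=
  | MS_x : forall (I J : C) (m : hom I J), Mx M m -> MS Dm M m
  | MS_pb : forall (I J V P : C) (m : hom I J) (n : hom V J)
      (p1 : hom P I) (p2 : hom P V),
      MS Dm M m -> Dm V J n -> is_pullback m n p1 p2 -> MS Dm M p2.

End Notions.

Arguments mono {C A B} f.
Arguments is_pullback {C A B D} f g {P} p1 p2.
Arguments is_product {C A B P} p1 p2.
Arguments is_dprod {C A B X} f p {P} q {Q} qP qA ev.
Arguments orth {C I J} m E.

(* Main.v *)
Require Import Defs.

Section Aux.
Variable C : Cat.

Lemma pb_sym {A B D : C} (f : hom A D) (g : hom B D) (P : C) (p1 : hom P A) (p2 : hom P B) :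
  is_pullback f g p1 p2 -> is_pullback g f p2 p1.
Proof.
  intros [Hc Hu]; split; [symmetry; exact Hc|].
  intros Z x y Hxy. destruct (Hu Z y x (eq_sym Hxy)) as [k [[H1 H2] Hk]].
  exists k; split; [split; assumption|].
  intros k' [H1' H2']. apply Hk; split; assumption.
Qed.

Lemma paste {I J V P S O : C} (phi : hom J S) (top : hom O S) (n : hom V J) (u : hom V O)
  (m : hom I J) (p1 : hom P I) (p2 : hom P V) :
  is_pullback phi top n u -> is_pullback m n p1 p2 ->
  is_pullback (phi \o m) top p1 (u \o p2).
Proof.
  intros [HVc HVu] [HPc HPu]; split.
  - rewrite <- cmp_assoc, HPc, cmp_assoc, HVc, cmp_assoc. reflexivity.
  - intros Z x y Hxy.
    assert (E1 : phi \o (m \o x) = top \o y) by (rewrite cmp_assoc; exact Hxy).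
    destruct (HVu Z (m \o x) y E1) as [z [[Hz1 Hz2] Hzu]].
    destruct (HPu Z x z (eq_sym Hz1)) as [k [[Hk1 Hk2] Hku]].
    exists k; split.
    + split; [exact Hk1|]. rewrite <- cmp_assoc, Hk2. exact Hz2.
    + intros k' [H1 H2]. apply Hku. split; [exact H1|].
      symmetry; apply Hzu. split.
      * rewrite cmp_assoc, <- HPc, <- cmp_assoc, H1. reflexivity.
      * rewrite cmp_assoc. exact H2.
Qed.
End Aux.

Theorem mainTheorem10 (C : Cat) (HC : lccc C)
    (Dm : mclass C) (one Sig : C) (top : hom one Sig)
    (Hone : is_terminal one) (Hdom : dominance Dm top)
    (M : mclass C) (HM : forall (I J : C) (m : hom I J), M I J m -> mono m)
    (E : C) (bang : hom E one)
    (* L E = sum_(phi : Sigma) E^phi = the dependent product of E -> 1 along top *)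
    (LE : C) (q : hom LE Sig) (Q : C) (qP : hom Q LE) (qA : hom Q one)
    (ev : hom Q E) (HL : is_dprod top bang q qP qA ev) :
  class_orth (Mx M) Sig -> class_orth (MS Dm M) E -> class_orth (Mx M) LE.
Proof.
  intros Hsig HE I J m Hm f.
  destruct HC as [Hpb _].
  destruct HL as [HQ [Hev HLu]].
  pose proof HQ as [HQc HQu].
  assert (Hone_u : forall X (a b : hom X one), a = b).
  { intros X a b; destruct (Hone X) as [t Ht]; rewrite (Ht a), (Ht b); reflexivity. }
  destruct (Hsig I J m Hm (q \o f)) as [phi [Hphi Hphiu]].
  destruct (Hpb J one Sig phi top) as [V [n [u HV]]].
  assert (HnD : Dm V J n) by (eapply (dom_pb Hdom); [apply (dom_top Hdom)| apply (pb_sym); exact HV]).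
  destruct (Hpb I V J m n) as [P [p1 [p2 HP]]].
  assert (Hp2 : MS Dm M p2) by (eapply MS_pb; [apply MS_x; exact Hm| exact HnD| exact HP]).
  pose proof HV as [HVc HVu]. pose proof HP as [HPc HPu].
  pose proof (@paste C _ _ _ _ _ _ phi top n u m p1 p2 HV HP) as Hpaste. rewrite Hphi in Hpaste.
  destruct Hpaste as [E0 Hpu].
  assert (E0' : q \o (f \o p1) = top \o (u \o p2)) by (rewrite cmp_assoc; exact E0).
  destruct (HQu P (f \o p1) (u \o p2) E0') as [k0 [[Hk01 Hk02] Hk0u]].
  destruct (HE P V p2 Hp2 (ev \o k0)) as [e [He Heu]].
  assert (Key : forall g' : hom J LE, g' \o m = f ->
     forall k : hom V Q, qP \o k = g' \o n -> qA \o k = u -> ev \o k = e).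
  { intros g' Hg' k Hk1 Hk2. symmetry; apply Heu.
    rewrite <- cmp_assoc. f_equal. symmetry; apply Hk0u. split.
    - rewrite cmp_assoc, Hk1, <- cmp_assoc, <- HPc, cmp_assoc, Hg'. reflexivity.
    - rewrite cmp_assoc, Hk2. reflexivity. }
  destruct (HLu J phi V n u HV e (Hone_u _ _ _)) as [h [[Hh1 Hh2] Hhu]].
  exists h; split.
  -
    assert (Hpb2 : is_pullback (q \o f) top p1 (u \o p2)) by (split; assumption).
    destruct (HLu I (q \o f) P p1 (u \o p2) Hpb2 (ev \o k0) (Hone_u _ _ _))
      as [h0 [_ Hh0u]].
    transitivity h0; [symmetry|]; apply Hh0u; split.
    + rewrite cmp_assoc, Hh1. exact Hphi.
    + intros k Hk1 Hk2.
      assert (E2 : q \o (h \o n) = top \o u) by (rewrite cmp_assoc, Hh1; exact HVc).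
      destruct (HQu V (h \o n) u E2) as [k' [[Hk'1 Hk'2] _]].
      assert (E3 : q \o ((h \o m) \o p1) = top \o (u \o p2))
        by (rewrite <- Hk1, <- Hk2, cmp_assoc, HQc, cmp_assoc; reflexivity).
      destruct (HQu P ((h \o m) \o p1) (u \o p2) E3) as [k1 [_ Hk1u]].
      assert (Ek : k = k' \o p2).
      { transitivity k1; [symmetry|]; apply Hk1u; split; try assumption.
        - rewrite cmp_assoc, Hk'1, <- !cmp_assoc, HPc. reflexivity.
        - rewrite cmp_assoc, Hk'2. reflexivity. }
      rewrite Ek, cmp_assoc, (Hh2 k' Hk'1 Hk'2). exact He.
    + reflexivity.
    + intros k Hk1 Hk2. f_equal. symmetry; apply Hk0u; split; assumption.
  - intros g' Hg'. apply Hhu. split.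
    + symmetry; apply Hphiu. rewrite <- cmp_assoc, Hg'. reflexivity.
    + apply Key; exact Hg'.
Qed.
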